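(* Let $p$ be a prime and $G=\mathbb{S}_p$ or $\mathbb{A}_p$. If $\mathcal{C}$ is a conjugacy class of elements of order $p$ in $G$, then $K_{\mathcal{C}}$ is irreducible.
   Context: For a finite group $G$ and a subset $\mathcal{C}\subseteq G\setminus\{1\}$ closed under conjugation, the Killing form $K_{\mathcal{C}}$ is the bilinear form on the complex vector space with basis $\mathcal{C}$ given on basis elements by $K_{\mathcal{C}}(a,b)=|C_G(ab)\cap\mathcal{C}|$. $K_{\mathcal{C}}$ is irreducible if the graph with vertex set $\mathcal{C}$, in which distinct $a,b$ are adjacent iff $C_G(ab)\cap\mathcal{C}\neq\emptyset$, is connected, and reducible otherwise. *)

(* Defs.v *)
From mathcomp Require Import all_boot all_fingroup all_solvable.
Set Implicit Arguments. Unset Strict Implicit. Unset Printing Implicit Defensive.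
Local Open Scope group_scope.

Definition killing_adj (gT : finGroupType) (G C : {set gT}) : rel gT :=
  fun a b => (a != b) && ('C_G[a * b] :&: C != set0).

Definition killing_graph (gT : finGroupType) (G C : {set gT}) : rel gT :=
  fun a b => [&& a \in C, b \in C & killing_adj G C a b].

(* K_C is irreducible iff the graph on C is connected. *)
Definition killing_irreducible (gT : finGroupType) (G C : {set gT}) : Prop :=
  forall a b, a \in C -> b \in C -> connect (killing_graph G C) a b.

(* Main.v *)
Require Import Defs.
From mathcomp Require Import all_boot all_fingroup all_solvable.
From mathcomp Require Import zify.
Set Implicit Arguments. Unset Strict Implicit. Unset Printing Implicit Defensive.
Local Open Scope group_scope.

Section Graph.
Variable (gT : finGroupType) (G : {group gT}) (x : gT).
Hypothesis xG : x \in G.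
Let C := x ^: G.
Let R := killing_graph G C.

Lemma RP a b : reflect [/\ a \in C, b \in C, a != b &
   exists2 e, e \in G & e \in C /\ commute e (a * b)] (R a b).
Proof.
rewrite /R /killing_graph /killing_adj.
apply: (iffP idP).
  case/and3P=> aC bC /andP[ab /set0Pn[e]].
  move/setIP=> [/setIP[eG /cent1P ce] eC].
  by split=> //; exists e.
case=> aC bC ab [e eG [eC ce]]; rewrite aC bC ab /=.
by apply/set0Pn; exists e; rewrite in_setI eC andbT; apply/setIP; split=> //; apply/cent1P.
Qed.

Lemma memC_J a g : g \in G -> (a ^ g \in C) = (a \in C).
Proof.
move=> gG; rewrite memJ_norm //; exact: (subsetP (class_norm x G)).
Qed.

Lemma R_J a b g : g \in G -> R a b -> R (a ^ g) (b ^ g).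
Proof.
move=> gG /RP[aC bC ab [e eG [eC ce]]]; apply/RP; split.
- by rewrite memC_J.
- by rewrite memC_J.
- by apply: contra ab => /eqP/conjg_inj ->.
exists (e ^ g); first by rewrite groupJ.
split; first by rewrite memC_J.
by rewrite -conjMg /commute -!conjMg ce.
Qed.

Lemma connect_J a b g : g \in G -> connect R a b -> connect R (a ^ g) (b ^ g).
Proof.
move=> gG /connectP[s Rs ->]; elim: s a Rs => [|y s IH] a /=.
  by rewrite connect0.
case/andP=> Ray /IH; apply: connect_trans; apply: connect1; exact: R_J.
Qed.

Definition Hset := [set g in G | connect R x (x ^ g)].

Lemma Hset_group : group_set Hset.
Proof.
apply/group_setP; split; first by rewrite inE group1 conjg1 connect0.
move=> g h; rewrite !inE => /andP[gG cg] /andP[hG ch].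
rewrite groupM //=; apply: connect_trans ch _.
by rewrite conjgM; apply: connect_J.
Qed.

Canonical H := Group Hset_group.

Lemma H_full : G \subset H -> killing_irreducible G C.
Proof.
move=> sGH a b /imsetP[g gG ->] /imsetP[h hG ->].
have /setIdP[_ ch] := subsetP sGH h hG.
have /setIdP[_ cg] := subsetP sGH g^-1 (groupVr gG).
apply: connect_trans _ ch.
by have := connect_J gG cg; rewrite -conjgM mulVg conjg1.
Qed.


Lemma H_cert h e : h \in G -> e \in G -> e \in C -> commute e (x * x ^ h) ->
  h \in H.
Proof.
move=> hG eG eC ce; rewrite inE hG /=.
have [<-|nx] := eqVneq x (x ^ h); first exact: connect0.
apply: connect1; apply/RP; split=> //; first exact: class_refl.
  exact: memJ_class.
by exists e.
Qed.

Lemma H_cyc g : g \in G -> x ^ g \in <[x]> -> g \in H.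
Proof.
move=> gG xgx; apply: (H_cert gG xG); first exact: class_refl.
apply: commuteM; first exact: commute_refl.
by case/cycleP: xgx => i ->; apply: commuteX.
Qed.

End Graph.
Lemma ident_key (gT : finGroupType) (x t : gT) :
  t * t = 1 -> commute t (x * t * x^-1) ->
  x * x ^ (t * t ^ x) = (x ^ t) ^+ 2.
Proof.
move=> tt ct.
have tV : t^-1 = t by apply: (mulgI t); rewrite mulgV tt.
rewrite !conjgE !invMg tV invgK expgS expg1.
have e1 : t * (x * t * x^-1) * t = x * t * x^-1.
  by rewrite ct -!mulgA tt mulg1.
rewrite -!mulgA mulKVg; congr (t * (x * _)).
have e2 : t * (x * (t * (x^-1 * t))) = x * (t * x^-1) by rewrite !mulgA -e1 !mulgA.
rewrite [RHS]mulgA tt mul1g.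
transitivity ((t * (x * (t * (x^-1 * t)))) * x); first by rewrite !mulgA.
by rewrite e2 -!mulgA mulVg mulg1.
Qed.

Lemma tperm_comm (T : finType) (a b c d : T) :
  a != c -> a != d -> b != c -> b != d -> commute (tperm a b) (tperm c d).
Proof.
move=> ac ad bc bd; apply/permP => i; rewrite !permM.
have ca : c != a by rewrite eq_sym.
have da : d != a by rewrite eq_sym.
have cb : c != b by rewrite eq_sym.
have db : d != b by rewrite eq_sym.
have [ai|nai] := eqVneq a i.
  by subst i; rewrite tpermL (tpermD ca da) tpermL (tpermD cb db).
have [bi|nbi] := eqVneq b i.
  by subst i; rewrite tpermR (tpermD cb db) tpermR (tpermD ca da).
rewrite (tpermD nai nbi).
have [ci|nci] := eqVneq c i.
  by subst i; rewrite tpermL (tpermD ad bd).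
have [di|ndi] := eqVneq d i.
  by subst i; rewrite tpermR (tpermD ac bc).
by rewrite (tpermD nci ndi) (tpermD nai nbi).
Qed.
Lemma odd_permX (T : finType) (s : {perm T}) n :
  odd_perm (s ^+ n) = odd n && odd_perm s.
Proof.
elim: n => [|n IH]; first by rewrite expg0 odd_perm1.
by rewrite expgS odd_permM IH /=; case: (odd_perm s); case: (odd n).
Qed.

Section Perm.
Variable T : finType.
Hypotheses (Tp : prime #|T|) (T5 : 4 < #|T|).
Variable x : {perm T}.
Hypothesis ox : #[x] = #|T|.

Lemma x_fix k u : (x ^+ k) u = u -> #|T| %| k.
Proof.
move=> xu; have := perm_prime_astab Tp ox u.
have : x ^+ k \in 'C_<[x]>[u | 'P].
  by rewrite inE mem_cycle /=; apply/astab1P.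
move=> H1 H2; rewrite H2 in H1; move/set1gP: H1 => /eqP.
by rewrite -order_dvdn ox.
Qed.

Lemma x_even : odd_perm x = false.
Proof.
have := odd_permX x #[x]; rewrite expg_order odd_perm1 ox.
by case: (even_prime Tp) => [e2|-> //]; move: T5; rewrite e2.
Qed.

Lemma x_Alt : x \in 'Alt_T.
Proof. by rewrite Alt_even x_even. Qed.

Lemma x_Sylow : #|T|.-Sylow('Alt_T) <[x]>.
Proof.
rewrite /pHall cycle_subG x_Alt /= /pgroup -orderE ox pnat_id //=.
rewrite p'natE //; apply/negP => /dvdnP[k ek].
have sxA : <[x]> \subset 'Alt_T by rewrite cycle_subG x_Alt.
have L := Lagrange sxA.
have := @card_Alt T (ltnW (ltnW (ltnW T5))).
rewrite -L ek -orderE ox.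
case: #|T| Tp T5 => // q Tp' T5' /=.
rewrite factS => /eqP; rewrite mulnC -!mulnA eqn_mul2l /= => /eqP E.
have W : q.+1 %| (q`!).+1 by rewrite -Wilson //; apply: leq_trans T5'.
have : q.+1 %| q`! by rewrite -E dvdn_mull // dvdn_mulr.
move=> Hq; move: W; rewrite -[(q`!).+1]addn1 (dvdn_addr _ Hq) dvdn1 eqSS => /eqP q0.
by rewrite q0 in T5'.
Qed.

Lemma some_pt : exists u : T, u \in T.
Proof. by apply/card_gt0P; apply: leq_trans T5. Qed.

Lemma odd_norm : exists2 n, n \in 'N(<[x]>) & odd_perm n.
Proof.
have F := Frattini_arg (Alt_normal T) x_Sylow.
case: (pickP [pred n in 'N(<[x]>) | odd_perm n]) => [n /andP[nN on]|nN].
  by exists n.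
have sNA : 'N_('Sym_T)(<[x]>) \subset 'Alt_T.
  apply/subsetP => n /setIP[_ nn]; rewrite Alt_even.
  by have := nN n; rewrite /= nn /= => ->.
have : 'Sym_T \subset 'Alt_T by rewrite -{1}F mul_subG.
have [u _] := some_pt.
have xu : x u != u.
  apply/negP => /eqP xu; have : #|T| %| 1 by apply: (@x_fix 1%N u); rewrite expg1.
  by rewrite dvdn1 => /eqP T1; move: T5; rewrite T1.
move/subsetP => /(_ (tperm u (x u)) (in_setT _)).
by rewrite Alt_even odd_tperm eq_sym xu.
Qed.

Lemma xk_neq k u : 0 < k < #|T| -> (x ^+ k) u != u.
Proof.
case/andP=> k0 kT; apply/negP => /eqP xu; have := x_fix xu.
by move/(dvdn_leq k0); rewrite leqNgt kT.
Qed.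

Variable G : {group {perm T}}.
Hypothesis GSA : G :=: 'Sym_T \/ G :=: 'Alt_T.
Hypothesis xG : x \in G.

Lemma AltG : 'Alt_T \subset G.
Proof. by case: GSA => ->; rewrite ?subsetT ?subxx. Qed.

Lemma Alt_H : 'Alt_T \subset H G x.
Proof.
have [u _] := some_pt.
set w := x u; set v := x w; set t := tperm u v.
have x1 : (x ^+ 1) u = x u by rewrite expg1.
have x2 : (x ^+ 2) u = v by rewrite (expgS x 1) expg1 permM.
have x3 : (x ^+ 3) u = x v by rewrite (expgS x 2) (expgS x 1) expg1 !permM.
have nwu : w != u by rewrite /w -x1 xk_neq // (leq_trans _ T5).
have nvu : v != u by rewrite -x2 xk_neq // (leq_trans _ T5).
have nxvu : x v != u by rewrite -x3 xk_neq // (leq_trans _ T5).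
have xVu : x^-1 u != u.
  by apply: contra nwu => /eqP e; rewrite /w -{1}e permKV.
have xVv : x^-1 v = w by rewrite permK.
have tt : t * t = 1 by rewrite tperm2.
have tV : t^-1 = t by rewrite tpermV.
have ct : commute t (x * t * x^-1).
  have -> : x * t * x^-1 = t ^ x^-1 by rewrite conjgE invgK mulgA.
  rewrite tpermJ xVv; apply: tperm_comm.
  - by rewrite eq_sym.
  - by rewrite eq_sym.
  - by apply: contra nxvu => /eqP e; rewrite e permKV.
  - by apply: contra nwu => /eqP e; apply/eqP; apply: (@perm_inj _ x).
have key := ident_key tt ct.
set h := t * t ^ x in key.
have hA : h \in 'Alt_T by rewrite Alt_even odd_permM odd_permJ addbb.
have [n nN on] := odd_norm.
have xn : x ^ n \in <[x]> by rewrite memJ_norm // cycle_id.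
have [j xnj] := cycleP _ _ xn.
have ntA : n * t \in 'Alt_T by rewrite Alt_even odd_permM on odd_tperm eq_sym nvu.
have hH : h \in H G x.
  apply: (H_cert (G := G) (h := h) (e := x ^ (n * t))); first exact: (subsetP AltG).
  - by rewrite groupJ // (subsetP AltG).
  - by rewrite memJ_class // (subsetP AltG).
  rewrite key conjgM xnj conjXg; apply: commuteX2; exact: commute_refl.
have xH : x \in H G x.
  by apply: H_cyc => //; rewrite conjgE mulKg cycle_id.
have xtH : x ^ t \in H G x.
  have -> : x ^ t = (h * x^-1)^-1.
    by rewrite /h !conjgE !invMg !invgK -!mulgA tV mulKVg.
  by rewrite groupV groupM ?groupV.
pose K := <<[set x; x ^ t]>>.
have KH : K \subset H G x.
  by rewrite gen_subG subUset !sub1set xH xtH.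
have tN : t \in 'N(K).
  apply: (subsetP (norm_gen _)); rewrite inE; apply/subsetP => y.
  rewrite mem_conjg tV !inE => /orP[] /eqP e.
    by rewrite -e -conjgM tt conjg1 eqxx orbT.
  by move/conjg_inj: e => ->; rewrite eqxx.
have xN : x \in 'N(K) by apply: (subsetP (normG _)); rewrite mem_gen // set21.
have SN : 'Sym_T \subset 'N(K).
  have nuv : u != v by rewrite eq_sym.
  rewrite -(gen_tperm_circular_shift Tp nuv ox).
  by rewrite gen_subG subUset !sub1set tN xN.
have KA : K \subset 'Alt_T.
  by rewrite gen_subG subUset !sub1set !Alt_even odd_permJ x_even.
have KnA : K <| 'Alt_T.
  apply: normalS KA (Alt_subset T) _; rewrite /normal subsetT SN //.
have /simpleP[_ simA] := simple_Alt5 T5.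
case: (simA _ KnA) => [K1|<-//].
have : x \in (1 : {set {perm T}}) by rewrite -K1 mem_gen // set21.
move=> /set1gP x1'.
by move: ox; rewrite x1' order1 => T1; move: T5; rewrite -T1.
Qed.

Lemma G_H : G \subset H G x.
Proof.
case: GSA => GE; last by rewrite GE Alt_H.
have [n nN on] := odd_norm.
have nH : n \in H G x.
  apply: H_cyc => //; first by rewrite GE inE.
  by rewrite memJ_norm // cycle_id.
apply/subsetP => g _.
case og : (odd_perm g); last by apply: (subsetP Alt_H); rewrite Alt_even og.
have -> : g = (g * n^-1) * n by rewrite mulgKV.
by rewrite groupM // (subsetP Alt_H) // Alt_even odd_permM odd_permV og on.
Qed.

End Perm.

Lemma small_case (T : finType) (G : {group {perm T}}) (x : {perm T}) :
  #|T| <= 3 -> x \in G -> #[x] = #|T| -> 1 < #|T| ->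
  killing_irreducible G (x ^: G).
Proof.
move=> T3 xG ox T1; apply: H_full; apply/subsetP => g gG.
apply: H_cyc => //.
have sxG : <[x]> \subset G by rewrite cycle_subG.
suff nxG : <[x]> <| G.
  by rewrite memJ_norm ?cycle_id // (subsetP (normal_norm nxG)).
have L := Lagrange sxG.
have cG : #|G| <= #|T|`!.
  by rewrite -(card_Sym T); apply: subset_leq_card; apply: subsetT.
have i0 := indexg_gt0 G <[x]>.
rewrite -orderE ox in L.
have : #|G : <[x]>| <= 2.
  have HH : #|T| * #|G : <[x]>| <= #|T|`! by rewrite L.
  move: HH; case: #|T| T3 T1 => [|[|[|[|q]]]] // _ _ HH.
    by rewrite -(leq_pmul2l (isT : 0 < 2)); apply: leq_trans HH _.
  by rewrite -(leq_pmul2l (isT : 0 < 3)); apply: leq_trans HH _.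
move=> le2; case E : #|G : <[x]>| i0 le2 => [|[|[|k]]] // _ _.
  by rewrite (index1g sxG E) normal_refl.
exact: index2_normal.
Qed.

Unset Implicit Arguments.

Theorem lemma7p5 (p : nat) (G : {group {perm 'I_p}}) (x : {perm 'I_p}) :
  prime p ->
  (G :=: 'Sym_('I_p) \/ G :=: 'Alt_('I_p)) ->
  x \in G -> #[x] = p ->
  killing_irreducible G (x ^: G).
Proof.
move=> pp GSA xG ox.
have Tp : prime #|'I_p| by rewrite card_ord.
have oxT : #[x] = #|'I_p| by rewrite card_ord.
have [p3|p4] := leqP p 3.
  by apply: small_case; rewrite ?card_ord // prime_gt1.
have T5 : 4 < #|'I_p|.
  rewrite card_ord ltn_neqAle p4 andbT; apply/negP => /eqP p4'.
  by rewrite -p4' in pp.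
exact: (H_full (G_H Tp T5 oxT GSA xG)).
Qed.
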